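(* Let $\kappa$ be an infinite cardinal of uncountable cofinality $\mathrm{cf}(\kappa)$. If a Banach space $X$ of density character $\kappa$ contains an isomorphic copy of $c_0(\kappa)$, then $X$ admits an equivalent norm for which it is $\mathrm{SQ}_{<\mathrm{cf}(\kappa)}$.
   Context: For a cardinal $\mu$, a Banach space $Z$ is $\mathrm{SQ}_{<\mu}$ if for every set $A\subset S_Z$ with $|A|<\mu$ there exists $y\in S_Z$ with $\|x\pm y\|\le 1$ for all $x\in A$. *)

(* Defs.v *)
From HB Require Import structures.
From mathcomp Require Import all_boot all_order all_algebra.
From mathcomp Require Import all_classical all_reals all_analysis.
Set Implicit Arguments. Unset Strict Implicit. Unset Printing Implicit Defensive.
Import Order.TTheory GRing.Theory Num.Theory.
Import numFieldNormedType.Exports.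
Local Open Scope classical_set_scope.
Local Open Scope ring_scope.
Local Open Scope card_scope.

(* The cardinal kappa is represented by a type K equipped with a strict
   well-order lt whose order type is the initial ordinal of kappa:
   every proper initial segment has cardinality strictly less than K. *)
Definition initial_ordinal (K : Type) (lt : K -> K -> Prop) : Prop :=
  [/\ well_founded lt,
      (forall x y z, lt x y -> lt y z -> lt x z),
      (forall x y, [\/ lt x y, x = y | lt y x]) &
      (forall k : K, ~ ([set: K] #<= [set j | lt j k]))].

Definition cofinal (K : Type) (lt : K -> K -> Prop) (C : set K) : Prop :=
  forall k, exists2 c, C c & ~ lt c k.

Definition uncountable_cofinality (K : Type) (lt : K -> K -> Prop) : Prop :=
  forall C : set K, cofinal lt C -> ~ countable C.

(* |A| < cf(kappa): since cf(kappa) is the least cardinality of a cofinal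
   subset, this means no cofinal subset injects into A. *)
Definition card_lt_cf (K : Type) (lt : K -> K -> Prop) (T : Type) (A : set T) : Prop :=
  forall C : set K, cofinal lt C -> ~ (C #<= A).

Definition density_char_eq (R : realType) (X : normedModType R) (K : Type) : Prop :=
  (exists2 D : set X, dense D & D #<= [set: K]) /\
  (forall D : set X, dense D -> [set: K] #<= D).

Definition in_c0 (R : realType) (K : Type) (f : K -> R) : Prop :=
  forall e : R, 0 < e -> finite_set [set k | e <= `|f k|].

(* X contains an isomorphic copy of c_0(K) (with the sup norm):
   a linear map T : c_0(K) -> X with c ||f||_oo <= ||T f|| <= C ||f||_oo. *)
Definition contains_c0 (R : realType) (X : normedModType R) (K : Type) : Prop :=
  exists (T : (K -> R) -> X) (c C : R), [/\ 0 < c, 0 < C,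
    (forall (a : R) (f g : K -> R), in_c0 f -> in_c0 g ->
        T (fun k => a * f k + g k) = a *: T f + T g),
    (forall (f : K -> R) (M : R), in_c0 f -> (forall k, `|f k| <= M) ->
        `|T f| <= C * M) &
    (forall (f : K -> R) (k : K), in_c0 f -> c * `|f k| <= `|T f|)].

Definition equivalent_norm (R : realType) (X : normedModType R) (N : X -> R) : Prop :=
  [/\ (forall x, N x = 0 -> x = 0),
      (forall (a : R) x, N (a *: x) = `|a| * N x),
      (forall x y, N (x + y) <= N x + N y) &
      exists a b : R, [/\ 0 < a, 0 < b &
        forall x, a * `|x| <= N x /\ N x <= b * `|x|]].

Definition SQ_lt_cf (R : realType) (X : normedModType R) (N : X -> R)
    (K : Type) (lt : K -> K -> Prop) : Prop :=
  forall A : set X, A `<=` [set x | N x = 1] -> card_lt_cf lt A ->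
    exists2 y : X, N y = 1 &
      forall x, A x -> N (x + y) <= 1 /\ N (x - y) <= 1.

(* Main.v *)
Require Import Defs.
From HB Require Import structures.
From mathcomp Require Import all_boot all_order all_algebra.
From mathcomp Require Import all_classical all_reals all_analysis.
From mathcomp Require Import ring lra.
From Stdlib Require Import ClassicalEpsilon.
Set Implicit Arguments. Unset Strict Implicit. Unset Printing Implicit Defensive.
Import Order.TTheory GRing.Theory Num.Theory.
Import numFieldNormedType.Exports.
Local Open Scope classical_set_scope.
Local Open Scope ring_scope.
Local Open Scope card_scope.

Definition ile {T U} (A : set T) (B : set U) :=
  exists f : T -> U, (forall x, A x -> B (f x)) /\
    (forall x y, A x -> A y -> f x = f y -> x = y).

Lemma ile_card T U (A : set T) (B : set U) : ile A B -> A #<= B.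
Proof.
case=> f [fAB finj].
have : $|{injfun A >-> B}|.
  apply/injfunPex; exists f; first by move=> x /fAB.
  by move=> x y; rewrite !inE => Ax Ay; apply: finj.
by case=> g; exact: inj_card_le g.
Qed.

Lemma card_ile T U (u0 : U) (A : set T) (B : set U) : A #<= B -> ile A B.
Proof.
move/card_leP => /injfunPex [g _ ginj].
exists (fun x => match pselect (A x) with left Ax => val (g (SigSub (mem_set Ax))) | right _ => u0 end).
split.
  move=> x Ax; case: pselect => // Ax'.
  by case: (g _) => /= b; rewrite inE.
move=> x y Ax Ay; case: pselect => // Ax'; case: pselect => // Ay' /val_inj.
move/ginj; rewrite !inE => /(_ I I) h.
by move: (congr1 val h).
Qed.

Lemma ile_refl T (A : set T) : ile A A.
Proof. by exists id; split. Qed.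

Lemma ile_trans T U V (A : set T) (B : set U) (C : set V) :
  ile A B -> ile B C -> ile A C.
Proof.
case=> f [fAB fi] [g [gBC gi]]; exists (g \o f); split => /=.
  by move=> x /fAB /gBC.
by move=> x y Ax Ay /gi h; apply: fi => //; apply: h; apply: fAB.
Qed.

Lemma ile_sub T (A B : set T) : A `<=` B -> ile A B.
Proof. by move=> AB; exists id; split => // x /AB. Qed.
Section Hess.
Variables (K : Type) (lt : K -> K -> Prop).
Hypothesis wf : well_founded lt.
Hypothesis ltT : forall x y z, lt x y -> lt y z -> lt x z.
Hypothesis tri : forall x y, [\/ lt x y, x = y | lt y x].

Lemma lt_irr x : ~ lt x x.
Proof.
elim/(well_founded_ind wf): x => x IH h; exact: (IH x h h).
Qed.

Definition seg k := [set j | lt j k].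
Definition segc k := seg k `|` [set k].

Definition mx (p : K * K) := if `[< lt p.1 p.2 >] then p.2 else p.1.

Lemma mx_ge1 p : segc (mx p) p.1.
Proof.
rewrite /mx /segc; case: asboolP => h; [by left | by right].
Qed.

Lemma mx_ge2 p : segc (mx p) p.2.
Proof.
rewrite /mx /segc; case: asboolP => h; first by right.
case: (tri p.1 p.2) => [//|->|]; [by right|by left].
Qed.

Lemma mx_in p : mx p = p.1 \/ mx p = p.2.
Proof. by rewrite /mx; case: asboolP; [right|left]. Qed.

Definition gl (p q : K * K) := lt (mx p) (mx q) \/
  (mx p = mx q /\ (lt p.1 q.1 \/ (p.1 = q.1 /\ lt p.2 q.2))).

Lemma wf_gl : well_founded gl.
Proof.
suff H : forall m p, mx p = m -> Acc gl p by move=> p; exact: (H _ p erefl).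
intro m; induction m as [m IHm] using (well_founded_ind wf).
suff H : forall a b, mx (a, b) = m -> Acc gl (a, b) by move=> [a b]; apply: H.
intro a; induction a as [a IHa] using (well_founded_ind wf).
intro b; induction b as [b IHb] using (well_founded_ind wf).
move=> Hm; constructor => -[a' b'] [|[e [|[]]]] /=.
- by rewrite Hm => /IHm; apply.
- by move=> la; apply: IHa => //; rewrite e.
- by move=> ea lb; subst a'; apply: IHb => //; rewrite e.
Qed.

Lemma gl_total p q : p <> q -> gl p q \/ gl q p.
Proof.
case: p q => [a b] [a' b'] ne; rewrite /gl /=.
case: (tri (mx (a, b)) (mx (a', b'))) => [h|e|h]; [by left; left|idtac|by right; left].
case: (tri a a') => [h|ea|h]; [by left; right; split => //; left|idtac|by right; right; split => //; left].
subst a'; case: (tri b b') => [h|eb|h]; [by left; right; split => //; right|idtac|].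
  by subst b'.
by right; right; split => //; right.
Qed.

Lemma gl_segc p q : gl q p -> segc (mx p) q.1 /\ segc (mx p) q.2.
Proof.
move=> h.
have hm : segc (mx p) (mx q).
  by case: h => [h|[e _]]; [left|right].
have aux : forall z, segc (mx q) z -> segc (mx p) z.
  move=> z [hz|hz].
    by case: hm => [hm|hm]; left; [exact: ltT hz hm|rewrite -hm].
  by have -> : z = mx q by rewrite hz.
by split; apply: aux; [apply: mx_ge1|apply: mx_ge2].
Qed.

Lemma absorb (S : set K) a : infinite_set S -> ile (S `|` [set a]) S.
Proof.
move=> Sinf.
have [s0 Ss0] := infinite_setN0 Sinf.
move/infiniteP: Sinf => /(card_ile s0) [g [gS gi]].
have gi' : forall n m, g n = g m -> n = m by move=> n m; apply: gi.
pose h x := match pselect (x = a) with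
  | left _ => g 0%N
  | right _ => match pselect (exists n, x = g n) with
     | left e => g (proj1_sig (cid e)).+1
     | right _ => x end end.
exists h; split.
  move=> x Hx; rewrite /h; case: pselect => xa; first exact: gS.
  case: pselect => e; first exact: gS.
  by case: Hx.
move=> x y Hx Hy; rewrite /h.
case: (pselect (x = a)) => xa; case: (pselect (y = a)) => ya.
- by rewrite xa ya.
- case: (pselect (exists n, y = g n)) => [e|ne].
    by case: (cid e) => n /= _ /gi'.
  by move=> ey; exfalso; apply: ne; exists 0%N.
- case: (pselect (exists n, x = g n)) => [e|ne].
    by case: (cid e) => n /= _ /gi'.
  by move=> ey; exfalso; apply: ne; exists 0%N.
- case: (pselect (exists n, x = g n)) => [e|ne];
    case: (pselect (exists n, y = g n)) => [e'|ne'].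
  + case: (cid e) => n /= -> ; case: (cid e') => m /= ->.
    by move/gi' => [->].
  + by case: (cid e) => n /= _ ey; exfalso; apply: ne'; exists n.+1.
  + by case: (cid e') => n /= _ ey; exfalso; apply: ne; exists n.+1.
  + by [].
Qed.

Lemma ile_prod T U (A : set T) (B : set U) : ile A B -> ile (A `*` A) (B `*` B).
Proof.
case=> f [fAB fi]; exists (fun p => (f p.1, f p.2)); split.
  by move=> [x y] [/= Ax Ay]; split; apply: fAB.
move=> [x y] [x' y'] [/= Ax Ay] [/= Ax' Ay'] [] /fi-/(_ Ax Ax') ->.
by move/fi => /(_ Ay Ay') ->.
Qed.

Lemma finite_ile T U (A : set T) (B : set U) : ile A B -> finite_set B -> finite_set A.
Proof. by move/ile_card; apply: card_le_finite. Qed.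

Lemma hess k : infinite_set (seg k) -> ile (seg k `*` seg k) (seg k).
Proof.
induction k as [k IH] using (well_founded_ind wf) => kinf.
case: (pselect (exists k', lt k' k /\ ile (seg k) (seg k'))) => [[k' [lk' ik']]|caseB].
  have k'inf : infinite_set (seg k') by move=> fk'; apply: kinf; exact: finite_ile ik' fk'.
  apply: ile_trans (ile_prod ik') _.
  apply: ile_trans (IH _ lk' k'inf) _.
  by apply: ile_sub => j /= hj; exact: ltT hj lk'.
have ihk := inhabits k.
pose F (p : K * K) (rec : forall q, gl q p -> K) : K :=
  epsilon ihk (fun v => lt v k /\ forall q (H : gl q p), rec q H <> v).
pose f := Fix wf_gl (fun _ => K) F.
have fE p : f p = epsilon ihk (fun v => lt v k /\ forall q, gl q p -> f q <> v).
  rewrite /f Fix_eq /F; last first.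
    move=> x g1 g2 e.
    have -> : g1 = g2 by apply: functional_extensionality_dep => y;
       apply: functional_extensionality_dep => H; apply: e.
    by [].
  by [].
have fP p : seg k p.1 -> seg k p.2 -> lt (f p) k /\ forall q, gl q p -> f q <> f p.
  move=> p1 p2; move: (epsilon_spec ihk (fun v => lt v k /\ forall q, gl q p -> f q <> v)).
  rewrite -fE; apply.
  apply: contrapT => nex; apply: caseB; exists (mx p).
  have lm : lt (mx p) k by case: (mx_in p) => ->.
  split => //.
  have hsurj : forall v, lt v k -> exists q, gl q p /\ f q = v.
    move=> v lv; apply: contrapT => nq; apply: nex; exists v; split => // q gq fq.
    by apply: nq; exists q.
  have [qf qfP] : exists qf : K -> K * K, forall v, lt v k -> gl (qf v) p /\ f (qf v) = v.
    have := choice (fun v q => lt v k -> gl q p /\ f q = v).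
    case=> [v|qf qfP]; last by exists qf.
    case: (pselect (lt v k)) => lv; first by have [q hq] := hsurj v lv; exists q.
    by exists p.
  have i1 : ile (seg k) (segc (mx p) `*` segc (mx p)).
    exists qf; split.
      by move=> v lv; have [g _] := qfP v lv; exact: gl_segc g.
    by move=> x y lx ly e; rewrite -(qfP x lx).2 -(qfP y ly).2 e.
  case: (pselect (finite_set (seg (mx p)))) => fin.
    exfalso; apply: kinf; apply: (finite_ile i1).
    by apply: finite_setX; rewrite /segc finite_setU; split=> //; exact: finite_set1.
  apply: ile_trans i1 _.
  apply: ile_trans (ile_prod (absorb _ fin)) _.
  exact: IH.
exists f; split.
  by move=> p [p1 p2]; exact: (fP p p1 p2).1.
move=> p q [p1 p2] [q1 q2] e; apply: contrapT => ne.
case: (gl_total ne) => h.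
  exact: ((fP q q1 q2).2 p h e).
exact: ((fP p p1 p2).2 q h (esym e)).
Qed.
End Hess.
Section Enc.
Variables (K : Type) (lt : K -> K -> Prop).
Hypothesis wf : well_founded lt.
Hypothesis ltT : forall x y z, lt x y -> lt y z -> lt x z.
Hypothesis tri : forall x y, [\/ lt x y, x = y | lt y x].

Definition EncSet (g : K) := [set s : seq (K * rat) | List.Forall (fun p => lt p.1 g) s].

Lemma enc_codes k g : infinite_set (seg lt k) -> (seg lt g `<=` seg lt k) ->
  ile (EncSet g `*` [set: nat]) (seg lt k).
Proof.
move=> kinf sgk.
have [pr [prS pri]] := hess wf ltT tri kinf.
have [z0 z0S] := infinite_setN0 kinf.
move/infiniteP: (kinf) => /(card_ile z0) [nk [nkS nki]].
have nki' : forall n m, nk n = nk m -> n = m by move=> n m; apply: nki.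
have pri' : forall a b c d, seg lt k a -> seg lt k b -> seg lt k c -> seg lt k d ->
   pr (a, b) = pr (c, d) -> a = c /\ b = d.
  by move=> a b c d ha hb hc hd /pri => /(_ (conj ha hb) (conj hc hd)) [-> ->].
pose ec (p : K * rat) := pr (p.1, nk (pickle p.2)).
pose encl := foldr (fun p acc => pr (ec p, acc)) z0.
have ecS p : lt p.1 g -> seg lt k (ec p).
  by move=> h; apply: (prS _); split; [apply: sgk|apply: (nkS _)].
have enclS s : EncSet g s -> seg lt k (encl s).
  elim: s => [|p s IHs] //= hs; inversion hs; subst.
  by apply: (prS _); split; [apply: (ecS _)|apply: IHs].
have encli s1 s2 : EncSet g s1 -> EncSet g s2 -> size s1 = size s2 ->
    encl s1 = encl s2 -> s1 = s2.
  elim: s1 s2 => [|p1 s1 IH] [|p2 s2] //= h1 h2 [] sz e.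
  inversion h1 as [|? ? H1 T1]; inversion h2 as [|? ? H2 T2]; subst.
  have [e1 e2] := pri' _ _ _ _ (ecS _ H1) (enclS _ T1) (ecS _ H2) (enclS _ T2) e.
  have [ea eb] := pri' _ _ _ _ (sgk _ H1) (nkS _ I) (sgk _ H2) (nkS _ I) e1.
  move/nki'/(pcan_inj pickleK): eb => eb.
  rewrite (IH s2 T1 T2 sz e2) (surjective_pairing p1) (surjective_pairing p2) ea eb.
  by [].
exists (fun sn => pr (pr (nk (size sn.1), encl sn.1), nk sn.2)); split.
  move=> [s n] [/= hs _]; apply: (prS _); split; last exact: (nkS _).
  by apply: (prS _); split; [apply: (nkS _)|apply: (enclS _)].
move=> [s n] [s' n'] [/= hs _] [/= hs' _] /pri'.
have A1 : forall s, EncSet g s -> seg lt k (pr (nk (size s), encl s)).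
  by move=> t ht; apply: (prS _); split; [apply: (nkS _)|apply: (enclS _)].
move=> /(_ (A1 _ hs) (nkS _ I) (A1 _ hs') (nkS _ I)) [/pri' + /nki' ->].
move=> /(_ (nkS _ I) (enclS _ hs) (nkS _ I) (enclS _ hs')) [/nki' sz ee].
by rewrite (encli _ _ hs hs' sz ee).
Qed.
End Enc.
Lemma aux4 (V : zmodType) (a b c d : V) : a - d - c = (a - b - c) + (b - d).
Proof. by rewrite [a - b - c]addrAC -[a - c - b + _]addrA addKr addrAC. Qed.
Lemma aux5 (V : zmodType) (a b c d q : V) :
  (a - c) - (b - d) = (a - q - c) - (b - q - d).
Proof.
rewrite [a - q - c]addrAC [b - q - d]addrAC [-(b - d - q)]opprB.
by rewrite -[a - c - q + _]addrA addKr.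
Qed.

Section Dist.
Variables (R : realType) (X : normedModType R).

Definition subsp (S : set X) := [/\ S 0, (forall x y, S x -> S y -> S (x + y)) &
  (forall (a : R) x, S x -> S (a *: x))].

Definition dist (x : X) (S : set X) : R := inf [set `|x - s| | s in S].

Variable S : set X.
Hypothesis S0 : S 0.

Lemma dist_hasinf x : has_inf [set `|x - s| | s in S].
Proof.
split; first by exists `|x - 0|, 0.
by exists 0 => _ [s _ <-].
Qed.

Lemma dist_ge0 x : 0 <= dist x S.
Proof.
apply: lb_le_inf; first by exists `|x - 0|, 0.
by move=> _ [s _ <-].
Qed.

Lemma dist_le x s : S s -> dist x S <= `|x - s|.
Proof.
by move=> Ss; apply: (ge_inf (dist_hasinf x).2); exists s.
Qed.

Lemma dist_approx x eps : 0 < eps -> exists s, S s /\ `|x - s| < dist x S + eps.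
Proof.
move=> e0; have [_ [s Ss <-] h] := inf_adherent e0 (dist_hasinf x).
by exists s.
Qed.

Lemma dist_lb x b : (forall s, S s -> b <= `|x - s|) -> b <= dist x S.
Proof.
move=> h; apply: lb_le_inf; first by exists `|x - 0|, 0.
by move=> _ [s Ss <-]; apply: h.
Qed.

Lemma dist_norm x : dist x S <= `|x|.
Proof. by have := dist_le x S0; rewrite subr0. Qed.

Lemma dist_in s : S s -> dist s S = 0.
Proof.
move=> Ss; apply/eqP; rewrite eq_le dist_ge0 andbT.
by have := dist_le s Ss; rewrite subrr normr0.
Qed.

Hypothesis Ssub : subsp S.

Lemma dist_add x y : dist (x + y) S <= dist x S + dist y S.
Proof.
case: Ssub => _ SD _.
apply/ler_addgt0Pr => e e0.
have e20 : 0 < e / 2 by rewrite divr_gt0.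
have [s1 [S1 h1]] := dist_approx x e20.
have [s2 [S2 h2]] := dist_approx y e20.
apply: le_trans (dist_le _ (SD _ _ S1 S2)) _.
have -> : x + y - (s1 + s2) = (x - s1) + (y - s2) by rewrite opprD addrACA.
apply: le_trans (ler_normD _ _) _.
have -> : dist x S + dist y S + e = (dist x S + e / 2) + (dist y S + e / 2).
  by rewrite addrACA -splitr.
by apply: lerD; apply: ltW.
Qed.

Lemma dist_scale_le (a : R) x : dist (a *: x) S <= `|a| * dist x S.
Proof.
case: Ssub => _ _ SZ.
apply/ler_addgt0Pr => e e0.
have ea0 : 0 < e / (`|a| + 1) by rewrite divr_gt0 // ltr_wpDl.
have [s [Ss h]] := dist_approx x ea0.
apply: le_trans (dist_le _ (SZ a _ Ss)) _.
rewrite -scalerBr normrZ.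
apply: le_trans (ler_wpM2l (normr_ge0 a) (ltW h)) _.
rewrite mulrDr lerD2l.
have h1 : `|a| / (`|a| + 1) <= 1.
  by rewrite ler_pdivrMr ?mul1r ?lerDl // ltr_wpDl.
by rewrite mulrCA ler_piMr // ltW.
Qed.

Lemma dist_scale (a : R) x : dist (a *: x) S = `|a| * dist x S.
Proof.
apply/eqP; rewrite eq_le dist_scale_le /=.
have [->|a0] := eqVneq a 0.
  by rewrite normr0 mul0r scale0r dist_ge0.
have := dist_scale_le a^-1 (a *: x); rewrite scalerA mulVf // scale1r.
by rewrite normfV ler_pdivlMl ?normr_gt0.
Qed.

Lemma dist_shift x s : S s -> dist (x + s) S = dist x S.
Proof.
move=> Ss; apply/eqP; rewrite eq_le.
have := dist_add x s; rewrite (dist_in Ss) addr0 => -> /=.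
have := dist_add (x + s) ((-1) *: s); rewrite dist_scale (dist_in Ss) mulr0 addr0.
by rewrite scaleN1r addrK.
Qed.

End Dist.
Section C0.
Variables (R : realType) (K : Type) (X : normedModType R) (T : (K -> R) -> X).
Hypothesis Tlin : forall (a : R) (f g : K -> R), in_c0 f -> in_c0 g ->
        T (fun k => a * f k + g k) = a *: T f + T g.

Definition dl (j : K) : K -> R := fun i => if `[< i = j >] then 1 else 0.

Lemma dl_eq j : dl j j = 1.
Proof. by rewrite /dl asboolT. Qed.

Lemma dl_neq j i : i <> j -> dl j i = 0.
Proof. by move=> h; rewrite /dl asboolF. Qed.

Lemma c0_lin (a : R) (f g : K -> R) : in_c0 f -> in_c0 g -> in_c0 (fun k => a * f k + g k).
Proof.
move=> hf hg e e0.
have e2 : 0 < e / 2 by rewrite divr_gt0.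
have e1 : 0 < e / 2 / (`|a| + 1) by rewrite divr_gt0 // ltr_wpDl.
apply: (@sub_finite_set _ _ ([set k | e / 2 / (`|a| + 1) <= `|f k|] `|` [set k | e / 2 <= `|g k|])).
  move=> k /= hk; apply: contrapT => /not_orP [] /negP; rewrite -ltNge => h1 /negP.
  rewrite -ltNge => h2; move: hk; apply/negP; rewrite -ltNge.
  apply: le_lt_trans (ler_normD _ _) _; rewrite normrM.
  have -> : e = e / 2 + e / 2 by rewrite -splitr.
  apply: ler_ltD => //.
  apply: le_trans (ler_wpM2l (normr_ge0 a) (ltW h1)) _.
  have h3 : `|a| / (`|a| + 1) <= 1 by rewrite ler_pdivrMr ?mul1r ?lerDl // ltr_wpDl.
  by rewrite mulrCA ler_piMr // ltW.
by rewrite finite_setU; split; [apply: hf|apply: hg].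
Qed.

Lemma c0_0 : in_c0 (fun _ : K => (0 : R)).
Proof.
move=> e e0; apply: (@sub_finite_set _ _ set0); last exact: finite_set0.
by move=> k /=; rewrite normr0 leNgt e0.
Qed.

Lemma c0_dl j : in_c0 (dl j).
Proof.
move=> e e0; apply: (@sub_finite_set _ _ [set j]); last exact: finite_set1.
move=> k /=; case: (pselect (k = j)) => // kj.
by rewrite dl_neq // normr0 leNgt e0.
Qed.

Lemma c0_D (f g : K -> R) : in_c0 f -> in_c0 g -> in_c0 (fun k => f k + g k).
Proof.
move=> hf hg; have := c0_lin 1 hf hg.
by have -> : (fun k => 1 * f k + g k) = (fun k => f k + g k) by apply: funext => k; rewrite mul1r.
Qed.

Lemma c0_Z (a : R) (f : K -> R) : in_c0 f -> in_c0 (fun k => a * f k).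
Proof.
move=> hf; have := c0_lin a hf c0_0.
by have -> : (fun k => a * f k + 0) = (fun k => a * f k) by apply: funext => k; rewrite addr0.
Qed.

Lemma c0_B (f g : K -> R) : in_c0 f -> in_c0 g -> in_c0 (fun k => f k - g k).
Proof.
move=> hf hg; have := c0_lin (-1) hg hf.
by have -> : (fun k => -1 * g k + f k) = (fun k => f k - g k) by apply: funext => k; rewrite mulN1r addrC.
Qed.

Lemma T0 : T (fun _ => 0) = 0.
Proof.
have := Tlin 1 c0_0 c0_0.
have -> : (fun k : K => 1 * (0 : R) + 0) = (fun _ => 0) by apply: funext => k; rewrite mulr0 addr0.
rewrite scale1r => /(congr1 (fun z => z - T (fun _ => 0))).
by rewrite subrr addrK => <-.
Qed.

Lemma TD (f g : K -> R) : in_c0 f -> in_c0 g -> T (fun k => f k + g k) = T f + T g.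
Proof.
move=> hf hg; have := Tlin 1 hf hg; rewrite scale1r.
by have -> : (fun k => 1 * f k + g k) = (fun k => f k + g k) by apply: funext => k; rewrite mul1r.
Qed.

Lemma TZ (a : R) (f : K -> R) : in_c0 f -> T (fun k => a * f k) = a *: T f.
Proof.
move=> hf; have := Tlin a hf c0_0; rewrite T0 addr0.
by have -> : (fun k => a * f k + 0) = (fun k => a * f k) by apply: funext => k; rewrite addr0.
Qed.

Lemma TB (f g : K -> R) : in_c0 f -> in_c0 g -> T (fun k => f k - g k) = T f - T g.
Proof.
move=> hf hg; have := Tlin (-1) hg hf; rewrite scaleN1r addrC.
by have -> : (fun k => -1 * g k + f k) = (fun k => f k - g k) by apply: funext => k; rewrite mulN1r addrC.
Qed.

End C0.
Lemma ncof (K : Type) (lt : K -> K -> Prop) (A : set K) :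
  ~ cofinal lt A -> exists k, forall a, A a -> lt a k.
Proof.
move=> nc; apply: contrapT => nk; apply: nc => k.
apply: contrapT => nx; apply: nk; exists k => a Aa.
by apply: contrapT => nl; apply: nx; exists a.
Qed.

Section Main.
Variables (R : realType) (K : Type) (lt : K -> K -> Prop) (X : normedModType R).
Hypothesis wf : well_founded lt.
Hypothesis ltT : forall x y z, lt x y -> lt y z -> lt x z.
Hypothesis tri : forall x y, [\/ lt x y, x = y | lt y x].
Hypothesis init : forall k : K, ~ ([set: K] #<= [set j | lt j k]).
Hypothesis infK : infinite_set [set: K].
Hypothesis uncf : uncountable_cofinality lt.
Variables (T : (K -> R) -> X) (c C : R).
Hypothesis c_gt0 : 0 < c.
Hypothesis C_gt0 : 0 < C.
Hypothesis Tlin : forall (a : R) (f g : K -> R), in_c0 f -> in_c0 g ->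
        T (fun k => a * f k + g k) = a *: T f + T g.
Hypothesis Tub : forall (f : K -> R) (M : R), in_c0 f -> (forall k, `|f k| <= M) ->
        `|T f| <= C * M.
Hypothesis Tlb : forall (f : K -> R) (k : K), in_c0 f -> c * `|f k| <= `|T f|.
Variables (D : set X) (iota : X -> K).
Hypothesis Ddense : dense D.
Hypothesis iota_inj : forall x y, D x -> D y -> iota x = iota y -> x = y.

Local Notation dlk := (@dl R K).
Definition e j := T (dlk j).
Definition Dg g := [set d | D d /\ lt (iota d) g].
Definition V g := [set x | exists l : seq (X * R),
   List.Forall (Dg g) (map fst l) /\ x = \sum_(p <- l) p.2 *: p.1].
Definition del := c / 8.

Lemma del_gt0 : 0 < del.
Proof. by rewrite divr_gt0. Qed.

Lemma V_mono g1 g2 : lt g1 g2 -> V g1 `<=` V g2.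
Proof.
move=> l12 x [l [hl ->]]; exists l; split => //.
by apply: List.Forall_impl hl => d [Dd ld]; split => //; exact: ltT ld l12.
Qed.

Lemma V_subsp g : subsp (V g).
Proof.
split.
- by exists [::]; split => //; rewrite big_nil.
- move=> x y [l1 [h1 ->]] [l2 [h2 ->]]; exists (l1 ++ l2); split.
    by rewrite map_cat; apply/List.Forall_app; split.
  by rewrite big_cat.
- move=> a x [l [h ->]]; exists (map (fun p => (p.1, a * p.2)) l); split.
    by rewrite -map_comp.
  by rewrite big_map scaler_sumr; apply: eq_bigr => p _ /=; rewrite scalerA.
Qed.

Lemma V_D g d : Dg g d -> V g d.
Proof.
by move=> h; exists [:: (d, 1)]; split; [constructor|rewrite big_cons big_nil scale1r addr0].
Qed.

Lemma dense_approx x eps : 0 < eps -> exists d, D d /\ `|x - d| < eps.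
Proof.
move=> e0; have hne : ball x eps !=set0 by exists x; apply: ballxx.
have [d [bd Dd]] := Ddense hne (ball_open x eps).
by exists d; split => //; move: bd; rewrite -ball_normE.
Qed.

Lemma level x : exists g, forall eps, 0 < eps -> exists v, V g v /\ `|x - v| < eps.
Proof.
have [d dP] : exists d : nat -> X, forall n, D (d n) /\ `|x - d n| < n.+1%:R^-1.
  by apply: (choice (fun n y => D y /\ `|x - y| < n.+1%:R^-1)) => n; apply: dense_approx.
have cC : countable (range (iota \o d)) by exact: card_image_le.
have [g hg] := ncof (fun h => uncf h cC).
exists g => eps e0.
have [n hn] := ltr_add_invr e0; rewrite add0r in hn.
exists (d n); split; last exact: lt_trans (dP n).2 hn.
apply: V_D; split; first exact: (dP n).1.
by apply: hg; exists n.
Qed.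

Definition qv (l : seq (X * rat)) : X := \sum_(p <- l) (ratr p.2 : R) *: p.1.

Lemma qapprox (l : seq (X * R)) eps : 0 < eps ->
  exists l' : seq (X * rat), map fst l' = map fst l /\
     `|\sum_(p <- l) p.2 *: p.1 - qv l'| < eps.
Proof.
elim: l eps => [|[d a] l IH] eps e0.
  by exists [::]; split => //; rewrite /qv !big_nil subr0 normr0.
have e2 : 0 < eps / 2 by rewrite divr_gt0.
have [l' [hm hn]] := IH _ e2.
have eta0 : 0 < eps / 2 / (`|d| + 1) by rewrite divr_gt0 // ltr_wpDl.
set eta := eps / 2 / (`|d| + 1) in eta0 *.
have ae : a - eta < a + eta by rewrite ltrD2l gtrN.
have [q hq] := rat_in_itvoo ae.
have hq' : `|a - ratr q| < eta.
  by rewrite ltr_distlC; move: hq; rewrite in_itv.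
exists ((d, q) :: l'); split; first by rewrite /= hm.
rewrite big_cons /qv big_cons /= -/(qv l').
have -> : a *: d + \sum_(p <- l) p.2 *: p.1 - (ratr q *: d + qv l') =
   (a - ratr q) *: d + (\sum_(p <- l) p.2 *: p.1 - qv l').
  by rewrite scalerBl opprD addrACA.
apply: le_lt_trans (ler_normD _ _) _.
rewrite (splitr eps) normrZ.
apply: ler_ltD => //.
apply: le_trans (ler_wpM2r (normr_ge0 d) (ltW hq')) _.
rewrite /eta -mulrA.
have h1 : `|d| / (`|d| + 1) <= 1 by rewrite ler_pdivrMr ?mul1r ?lerDl // ltr_wpDl.
have -> : eps * (2^-1 / (`|d| + 1)) * `|d| = (eps / 2) * (`|d| / (`|d| + 1)) by ring.
by rewrite ler_piMr // ltW.
Qed.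

Lemma exists_inf_seg : exists k0, infinite_set (seg lt k0).
Proof.
have [k1 _] := infinite_setN0 infK.
move/infiniteP: infK => /(card_ile k1) [g0 [_ g0i]].
have cC : countable (range g0) by exact: card_image_le.
have [k0 hk0] := ncof (fun h => uncf h cC).
exists k0; apply/infiniteP; apply: ile_card; exists g0; split.
  by move=> n _; apply: hk0; exists n.
by move=> n m _ _; apply: g0i.
Qed.

Lemma count g : exists j, forall v f, V g v -> in_c0 f -> f j = 0 -> del <= `|e j - v - T f|.
Proof.
apply: contrapT => nj.
have bad : forall j, exists lf : seq (X * rat) * (K -> R),
    [/\ List.Forall (Dg g) (map fst lf.1), in_c0 lf.2, lf.2 j = 0 &
        `|e j - qv lf.1 - T lf.2| < 2 * del].
  move=> j; apply: contrapT => nb; apply: nj; exists j => v f Vv cf fj.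
  rewrite leNgt; apply/negP => h.
  case: Vv => l [hl vE].
  have [l' [hm hn]] := qapprox l del_gt0.
  apply: nb; exists (l', f); split => //=; first by rewrite hm.
  have -> : e j - qv l' - T f = (e j - v - T f) + (v - qv l') by apply: aux4.
  apply: le_lt_trans (ler_normD _ _) _.
  have -> : 2 * del = del + del by ring.
  by apply: ltrD => //; rewrite vE.
have [LF LFP] := choice _ bad.
pose L j := (LF j).1.
pose F j := (LF j).2.
pose phi (p : X * rat) := (iota p.1, p.2).
pose code j := map phi (L j).
have map_inj : forall l1 l2 : seq (X * rat), List.Forall D (map fst l1) ->
    List.Forall D (map fst l2) -> map phi l1 = map phi l2 -> l1 = l2.
  elim=> [|p1 l1 IH] [|p2 l2] //= h1 h2 [e1 e2 e3].
  inversion h1 as [|? ? H1 T1]; inversion h2 as [|? ? H2 T2]; subst.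
  rewrite (IH l2 T1 T2 e3) (surjective_pairing p1) (surjective_pairing p2) e2.
  by rewrite (iota_inj H1 H2 e1).
have DD : forall l : seq (X * rat), List.Forall (Dg g) (map fst l) -> List.Forall D (map fst l).
  by move=> l hl; apply: List.Forall_impl hl => d [].
have fib : forall j j', j <> j' -> code j = code j' -> 1 / 2 <= `|F j' j|.
  move=> j j' ne ec.
  have [Dj cj fjj nj'] := LFP j.
  have [Dj' cj' fj'j' nj''] := LFP j'.
  have eL : L j = L j' by apply: map_inj => //; apply: DD.
  pose h := fun i => (dlk j i - F j i) - (dlk j' i - F j' i).
  have ch : in_c0 h.
    by apply: c0_B; apply: c0_B => //; apply: c0_dl.
  have Th : T h = (e j - qv (L j) - T (F j)) - (e j' - qv (L j') - T (F j')).
    have c1 : in_c0 (fun i => dlk j i - F j i) by apply: c0_B => //; apply: c0_dl.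
    have c2 : in_c0 (fun i => dlk j' i - F j' i) by apply: c0_B => //; apply: c0_dl.
    rewrite /h (TB Tlin c1 c2) (TB Tlin (c0_dl j) cj) (TB Tlin (c0_dl j') cj').
    by rewrite eL; apply: aux5.
  have hj : h j = 1 + F j' j.
    by rewrite /h /F dl_eq dl_neq // fjj subr0 sub0r opprK.
  have := Tlb j ch; rewrite Th hj => hle.
  have hlt : c * `|1 + F j' j| < c / 2.
    apply: le_lt_trans hle _.
    apply: le_lt_trans (ler_normB _ _) _.
    have -> : c / 2 = 2 * del + 2 * del by rewrite /del; field.
    by apply: ltrD.
  have h1 : `|1 + F j' j| < 1 / 2.
    by rewrite -(ltr_pM2l c_gt0) mul1r.
  have h2 : 1 <= `|1 + F j' j| + `|F j' j|.
    have := ler_normB (1 + F j' j) (F j' j); rewrite addrK normr1 //.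
  rewrite -(lerD2l `|1 + F j' j|); apply: le_trans h2.
  by lra.
have finF : forall s, finite_set [set j | code j = s].
  move=> s; case: (pselect (exists j', code j' = s)) => [[j' hj']|ne]; last first.
    apply: (@sub_finite_set _ _ set0); last exact: finite_set0.
    by move=> j hj; apply: ne; exists j.
  apply: (@sub_finite_set _ _ ([set j'] `|` [set i | 1 / 2 <= `|F j' i|])).
    move=> j hj; case: (pselect (j = j')) => [->|njj]; [by left|right].
    by apply: fib => //; rewrite /= hj hj'.
  rewrite finite_setU; split; first exact: finite_set1.
  by have [_ cj' _ _] := LFP j'; apply: cj'; rewrite divr_gt0.
have [nu nuP] : exists nu : seq (K * rat) -> K -> nat, forall s x y,
    code x = s -> code y = s -> nu s x = nu s y -> x = y.
  apply: (choice (fun s f => forall x y, code x = s -> code y = s -> f x = f y -> x = y)) => s.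
  have /finite_set_leP [n hn] := finF s.
  have [f [_ fi]] := card_ile 0%N hn.
  by exists f => x y hx hy; apply: fi.
have Hinj : ile [set: K] (EncSet lt g `*` [set: nat]).
  exists (fun j => (code j, nu (code j) j)); split.
    move=> j _; split => //=; rewrite /EncSet /= /code.
    have [Dj _ _ _] := LFP j; rewrite -/(L j) in Dj.
    elim: (L j) Dj => [|p l IH] hD /=; first by constructor.
    by inversion hD as [|? ? H1 T1]; subst; constructor; [case: H1|apply: IH].
  move=> x y _ _ [e1 e2]; rewrite e1 in e2.
  exact: (nuP (code y)).
have [k0 k0inf] := exists_inf_seg.
have [k [kinf sgk]] : exists k, infinite_set (seg lt k) /\ seg lt g `<=` seg lt k.
  case: (tri g k0) => [h|h|h].
  - by exists k0; split => // x /= hx; exact: ltT hx h.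
  - by exists k0; split => //; rewrite h.
  - exists g; split => //; move=> fg; apply: k0inf; apply: sub_finite_set fg.
    by move=> x /= hx; exact: ltT hx h.
exact: (init (ile_card (ile_trans Hinj (enc_codes wf ltT tri kinf sgk)))).
Qed.

Definition jf g : K := proj1_sig (cid (count g)).
Lemma jfP g v f : V g v -> in_c0 f -> f (jf g) = 0 -> del <= `|e (jf g) - v - T f|.
Proof. exact: (proj2_sig (cid (count g))). Qed.

Definition J j := exists g, jf g = j.
Definition H j := [set x | exists g v f, [/\ jf g = j, V g v, in_c0 f, f j = 0 & x = v + T f]].
Definition Y := [set x | exists f, [/\ in_c0 f, (forall i, ~ J i -> f i = 0) & x = T f]].
Definition beta j := (dist (e j) (H j))^-1.
Definition Nset x := [set dist x Y] `|` [set beta j * dist x (H j) | j in J].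
Definition N x := sup (Nset x).

Lemma T0' : T (fun _ => 0) = 0.
Proof. exact: T0 Tlin. Qed.

Lemma H0 j : J j -> H j 0.
Proof.
case=> g gj; exists g, 0, (fun _ => 0); split => //; first by case: (V_subsp g).
  exact: c0_0.
by rewrite T0' addr0.
Qed.

Lemma H_sub j : J j -> subsp (H j).
Proof.
move=> Jj; split; first exact: H0.
- move=> x y [g1 [v1 [f1 [g1j V1 c1 f1j ->]]]] [g2 [v2 [f2 [g2j V2 c2 f2j ->]]]].
  have [g [gj Vg1 Vg2]] : exists g, [/\ jf g = j, V g1 `<=` V g & V g2 `<=` V g].
    case: (tri g1 g2) => [h|h|h].
    + by exists g2; split; [done|exact: V_mono|move=> ?].
    + by subst g2; exists g1; split => // ?.
    + by exists g1; split; [done|move=> ?|exact: V_mono].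
  exists g, (v1 + v2), (fun k => f1 k + f2 k); split => //.
  + by case: (V_subsp g) => _ VD _; apply: VD; [apply: Vg1|apply: Vg2].
  + exact: c0_D.
  + by rewrite f1j f2j addr0.
  + by rewrite (TD Tlin c1 c2) addrACA.
- move=> a x [g [v [f [gj Vv cf fj ->]]]].
  exists g, (a *: v), (fun k => a * f k); split => //.
  + by case: (V_subsp g) => _ _ VZ; apply: VZ.
  + exact: c0_Z.
  + by rewrite fj mulr0.
  + by rewrite (TZ Tlin a cf) scalerDr.
Qed.

Lemma Y_sub : subsp Y.
Proof.
split.
- by exists (fun _ => 0); split => //; [exact: c0_0|rewrite T0'].
- move=> x y [f1 [c1 z1 ->]] [f2 [c2 z2 ->]]; exists (fun k => f1 k + f2 k); split.
  + exact: c0_D.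
  + by move=> i Ji; rewrite z1 // z2 // addr0.
  + by rewrite (TD Tlin c1 c2).
- move=> a x [f [cf zf ->]]; exists (fun k => a * f k); split.
  + exact: c0_Z.
  + by move=> i Ji; rewrite zf // mulr0.
  + by rewrite (TZ Tlin a cf).
Qed.

Lemma Y0 : Y 0.
Proof. by case: Y_sub. Qed.

Lemma e_in_H i j : J i -> i <> j -> H i (e j).
Proof.
case=> g gi ij; exists g, 0, (dlk j); split => //.
- by case: (V_subsp g).
- exact: c0_dl.
- exact: dl_neq.
- by rewrite add0r.
Qed.

Lemma e_in_Y j : J j -> Y (e j).
Proof.
move=> Jj; exists (dlk j); split => //; first exact: c0_dl.
move=> i Ji; apply: dl_neq => ij; apply: Ji; by rewrite ij.
Qed.

Lemma dist_eH j : J j -> del <= dist (e j) (H j).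
Proof.
move=> Jj; apply: (dist_lb (H0 Jj)) => h [g [v [f [gj Vv cf fj ->]]]].
rewrite opprD addrA; subst j; exact: jfP.
Qed.

Lemma dist_eH_gt0 j : J j -> 0 < dist (e j) (H j).
Proof. by move=> Jj; apply: lt_le_trans (dist_eH Jj); exact: del_gt0. Qed.

Lemma beta_gt0 j : J j -> 0 < beta j.
Proof. by move=> Jj; rewrite /beta invr_gt0; exact: dist_eH_gt0. Qed.

Lemma beta_le j : J j -> beta j <= del^-1.
Proof.
by move=> Jj; rewrite /beta lef_pV2 ?posrE ?dist_eH_gt0 ?del_gt0 //; exact: dist_eH.
Qed.

Lemma beta_e j : J j -> beta j * dist (e j) (H j) = 1.
Proof. by move=> Jj; rewrite /beta mulVf // gt_eqF // dist_eH_gt0. Qed.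

Lemma delV_ge0 : 0 <= del^-1.
Proof. by rewrite invr_ge0 ltW // del_gt0. Qed.

Lemma Nset_ub x r : Nset x r -> r <= `|x| + del^-1 * `|x|.
Proof.
case=> [->|[j Jj <-]].
  apply: le_trans (dist_norm Y0 x) _.
  by rewrite lerDl mulr_ge0 // delV_ge0.
apply: le_trans (_ : del^-1 * `|x| <= _); last by rewrite lerDr.
apply: ler_pM; [exact: ltW (beta_gt0 Jj)|exact: (dist_ge0 (H0 Jj) _)|exact: beta_le|exact: (dist_norm (H0 Jj) _)].
Qed.

Lemma Nset_has_sup x : has_sup (Nset x).
Proof.
split; first by exists (dist x Y); left.
by exists (`|x| + del^-1 * `|x|) => r; apply: Nset_ub.
Qed.

Lemma N_ge x r : Nset x r -> r <= N x.
Proof. by move=> hr; apply: (sup_upper_bound (Nset_has_sup x)). Qed.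

Lemma N_le x b : (forall r, Nset x r -> r <= b) -> N x <= b.
Proof. by move=> h; apply: ge_sup; [exists (dist x Y); left|]. Qed.

Lemma NY x : dist x Y <= N x.
Proof. by apply: N_ge; left. Qed.

Lemma NH x j : J j -> beta j * dist x (H j) <= N x.
Proof. by move=> Jj; apply: N_ge; right; exists j. Qed.

Lemma N_ge0 x : 0 <= N x.
Proof. exact: le_trans (dist_ge0 Y0 x) (NY x). Qed.

Lemma N_add x y : N (x + y) <= N x + N y.
Proof.
apply: N_le => r [->|[j Jj <-]].
  apply: le_trans (dist_add Y0 Y_sub x y) _.
  by apply: lerD; apply: NY.
apply: le_trans (_ : beta j * (dist x (H j) + dist y (H j)) <= _).
  by apply: ler_wpM2l; [exact: ltW (beta_gt0 Jj)|exact: dist_add (H0 Jj) (H_sub Jj) x y].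
by rewrite mulrDr; apply: lerD; apply: NH.
Qed.

Lemma N_scale_le (a : R) x : N (a *: x) <= `|a| * N x.
Proof.
apply: N_le => r [->|[j Jj <-]].
  by rewrite (dist_scale Y0 Y_sub); apply: ler_wpM2l => //; apply: NY.
rewrite (dist_scale (H0 Jj) (H_sub Jj)) mulrCA.
by apply: ler_wpM2l => //; apply: NH.
Qed.

Lemma N_scale (a : R) x : N (a *: x) = `|a| * N x.
Proof.
apply/eqP; rewrite eq_le N_scale_le /=.
have [->|a0] := eqVneq a 0.
  by rewrite normr0 mul0r N_ge0.
have := N_scale_le a^-1 (a *: x); rewrite scalerA mulVf // scale1r.
by rewrite normfV ler_pdivlMl ?normr_gt0.
Qed.

Lemma N_upper x : N x <= (1 + del^-1) * `|x|.
Proof. by apply: N_le => r /Nset_ub; rewrite mulrDl mul1r. Qed.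

Lemma dist_Tf_H i f : J i -> in_c0 f -> dist (T f) (H i) = `|f i| * dist (e i) (H i).
Proof.
move=> Ji cf.
have c1 : in_c0 (fun k => f k - f i * dlk i k).
  by apply: c0_B => //; apply: c0_Z; apply: c0_dl.
have -> : T f = f i *: e i + T (fun k => f k - f i * dlk i k).
  rewrite /e -(Tlin (f i) (c0_dl i) c1); congr T; apply: funext => k.
  by rewrite addrC subrK.
rewrite (dist_shift (H0 Ji) (H_sub Ji)) ?(dist_scale (H0 Ji) (H_sub Ji)) //.
case: Ji => g gi; exists g, 0, (fun k => f k - f i * dlk i k); split => //.
- by case: (V_subsp g).
- by rewrite dl_eq mulr1 subrr.
- by rewrite add0r.
Qed.

Definition Lc := 1 + C + C / del.

Lemma Lc_gt0 : 0 < Lc.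
Proof. by rewrite /Lc addr_gt0 // ?addr_gt0 // divr_gt0 // del_gt0. Qed.

Lemma N_lower x : `|x| <= Lc * N x.
Proof.
apply/ler_addgt0Pr => eps e0.
set q := 1 + C / del.
have q0 : 0 < q by rewrite /q addr_gt0 // divr_gt0 // del_gt0.
have ep0 : 0 < eps / q by rewrite divr_gt0.
have [y [[f [cf zf ->]] hy]] := dist_approx Y0 x ep0.
set M0 := N x + (N x + eps / q) / del.
have M00 : 0 <= M0 by rewrite addr_ge0 ?N_ge0 // divr_ge0 ?addr_ge0 ?N_ge0 ?ltW ?del_gt0.
have hf : forall i, `|f i| <= M0.
  move=> i; case: (pselect (J i)) => Ji; last by rewrite zf // normr0.
  have e1 : `|f i| = beta i * dist (T f) (H i).
    by rewrite (dist_Tf_H Ji cf) mulrCA beta_e // mulr1.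
  rewrite e1.
  have -> : T f = x + (T f - x) by rewrite addrC subrK.
  apply: le_trans (_ : beta i * (dist x (H i) + dist (T f - x) (H i)) <= _).
    by apply: ler_wpM2l; [exact: ltW (beta_gt0 Ji)|exact: (dist_add (H0 Ji) (H_sub Ji) _ _)].
  rewrite mulrDr /M0; apply: lerD; first exact: NH.
  apply: le_trans (_ : del^-1 * `|T f - x| <= _).
    apply: ler_pM; [exact: ltW (beta_gt0 Ji)|exact: (dist_ge0 (H0 Ji) _)|exact: beta_le|exact: (dist_norm (H0 Ji) _)].
  rewrite mulrC ler_wpM2r ?invr_ge0 ?ltW ?del_gt0 // distrC.
  by apply: lt_le_trans hy _; rewrite lerD2r NY.
have hT := Tub cf hf.
have h1 : `|x| <= (N x + eps / q) + C * M0.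
  have hx : `|x| <= `|x - T f| + `|T f| by have := ler_normD (x - T f) (T f); rewrite subrK.
  apply: le_trans hx _.
  apply: lerD => //.
  by apply: ltW; apply: lt_le_trans hy _; rewrite lerD2r NY.
apply: le_trans h1 _.
have -> : N x + eps / q + C * M0 = Lc * N x + q * (eps / q).
  by rewrite /M0 /Lc /q; field; rewrite ?gt_eqF ?del_gt0 // addr_gt0 // divr_gt0 // del_gt0.
by rewrite mulrCA divff ?mulr1 // gt_eqF.
Qed.

Lemma SQ : SQ_lt_cf N lt.
Proof.
move=> A hA hcard.
have [lv lvP] := choice _ level.
have ncC : ~ cofinal lt (lv @` A).
  move=> hcof; apply: (hcard _ hcof); apply: ile_card.
  have hex : forall k, exists x, (lv @` A) k -> A x /\ lv x = k.
    move=> k; case: (pselect ((lv @` A) k)) => [[x Ax <-]|nk]; first by exists x.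
    by exists 0.
  have [pre preP] := choice _ hex.
  exists pre; split; first by move=> k /preP [].
  by move=> k1 k2 h1 h2 ep; rewrite -(preP _ h1).2 -(preP _ h2).2 ep.
have [g hg] := ncof ncC.
set j := jf g.
have Jj : J j by exists g.
have distA : forall x, A x -> dist x (H j) = 0.
  move=> x Ax; apply/eqP; rewrite eq_le (dist_ge0 (H0 Jj)) andbT.
  apply/ler_addgt0Pr => eps e0; rewrite add0r.
  have [v [Vv hv]] := lvP x eps e0.
  have Vg : V g v by apply: (V_mono (hg (lv x) _)) => //; exists x.
  apply: le_trans (ltW hv); apply: (dist_le (H0 Jj)).
  exists g, v, (fun _ => 0); split => //; [exact: c0_0 | by rewrite T0' addr0].
have key : forall x (s : R), A x -> `|s| <= 1 -> N (x + s *: e j) <= 1.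
  move=> x s Ax s1.
  have Nx : N x = 1 := hA x Ax.
  apply: N_le => r [->|[i Ji <-]].
  - rewrite (dist_shift Y0 Y_sub); first by rewrite -Nx; exact: NY.
    by case: Y_sub => _ _ YZ; apply: YZ; apply: e_in_Y.
  - case: (pselect (i = j)) => [->|ij].
    + apply: le_trans (_ : beta j * (dist x (H j) + dist (s *: e j) (H j)) <= _).
        by apply: ler_wpM2l; [exact: ltW (beta_gt0 Jj)|exact: (dist_add (H0 Jj) (H_sub Jj) _ _)].
      by rewrite distA // add0r (dist_scale (H0 Jj) (H_sub Jj)) mulrCA beta_e // mulr1.
    + rewrite (dist_shift (H0 Ji) (H_sub Ji)); first by rewrite -Nx; exact: NH.
      by case: (H_sub Ji) => _ _ HZ; apply: HZ; apply: e_in_H.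
exists (e j).
  apply/eqP; rewrite eq_le; apply/andP; split.
    apply: N_le => r [->|[i Ji <-]].
    - by rewrite (dist_in Y0 (e_in_Y Jj)).
    - case: (pselect (i = j)) => [->|ij]; first by rewrite beta_e.
      by rewrite (dist_in (H0 Ji) (e_in_H Ji ij)) mulr0.
  by rewrite -(beta_e Jj); apply: NH.
move=> x Ax; split.
  by rewrite -[e j]scale1r; apply: key => //; rewrite normr1.
by rewrite -scaleN1r; apply: key => //; rewrite normrN normr1.
Qed.

Lemma equiv : equivalent_norm N.
Proof.
split.
- move=> x Nx0; apply/normr0_eq0; apply/eqP; rewrite eq_le normr_ge0 andbT.
  by have := N_lower x; rewrite Nx0 mulr0.
- exact: N_scale.
- exact: N_add.
- exists Lc^-1, (1 + del^-1); split.
  + by rewrite invr_gt0 Lc_gt0.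
  + by rewrite addr_gt0 // invr_gt0 del_gt0.
  + move=> x; split; last exact: N_upper.
    by rewrite ler_pdivrMl ?Lc_gt0 // N_lower.
Qed.

Lemma main_sec : exists N : X -> R, equivalent_norm N /\ SQ_lt_cf N lt.
Proof. by exists N; split; [exact: equiv|exact: SQ]. Qed.

End Main.

Local Close Scope card_scope.

Theorem theorem3p7 (R : realType) (K : Type) (lt : K -> K -> Prop)
    (X : completeNormedModType R) :
  initial_ordinal lt ->
  infinite_set [set: K] ->
  uncountable_cofinality lt ->
  density_char_eq X K ->
  contains_c0 X K ->
  exists N : X -> R, equivalent_norm N /\ SQ_lt_cf N lt.
Proof.
move=> [wf ltT tri init] infK uncf [[D Ddense DK] _] [T [c [C [c0 C0 Tlin Tub Tlb]]]].
have [k1 _] := infinite_setN0 infK.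
have [iota [_ iinj]] := card_ile k1 DK.
exact: (main_sec wf ltT tri init infK uncf c0 C0 Tlin Tub Tlb Ddense iinj).
Qed.
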